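(* Let $G\in\mathcal{C}$, let $H$ be a hole of $G$, and let $u,v\in V(G)\setminus V(H)$ each be either a major vertex or a clone for $H$. Suppose $u$ and $v$ are nested with respect to $H$ and $uv\in E(G)$. Then $u$ and $v$ have a common neighbor in $H$.
   Context: All graphs are finite and simple; paths are induced paths; a hole is an induced cycle of length at least four. $\mathcal{C}$ is the class of graphs containing no theta, pyramid, prism or turtle as an induced subgraph, where: a theta consists of two nonadjacent vertices $a,b$ and three paths from $a$ to $b$, otherwise vertex-disjoint, any two of which induce a hole; a pyramid consists of a vertex $a$, a triangle $\{b_1,b_2,b_3\}$ and paths $P_i$ from $a$ to $b_i$, pairwise disjoint except at $a$, any two of which induce a hole; a prism consists of two disjoint triangles $\{a_1,a_2,a_3\},\{b_1,b_2,b_3\}$ and pairwise disjoint paths $P_i$ from $a_i$ to $b_i$, any two of which induce a hole; a turtle consists of disjoint paths $P_1$ (from $a_1$ to $b_1$), $P_2$ (from $a_2$ to $b_2$) with $a_1a_2,b_1b_2$ edges and $V(P_1)\cup V(P_2)$ inducing a hole, plus adjacent vertices $x,y$ where $x$ has at least three neighbors in $P_1$ and none in $P_2$, and $y$ has at least three neighbors in $P_2$ and none in $P_1$. For a hole $H$ and $u\notin V(H)$, $N_H(u)$ is the set of neighbors of $u$ in $H$. A vertex $u\notin V(H)$ is minor for $H$ if $N_H(u)\neq\emptyset$ and $N_H(u)$ is contained in the vertex set of some three-vertex subpath of $H$; it is major for $H$ if $N_H(u)\ne\emptyset$ and $u$ is not minor. A vertex $u\notin V(H)$ is a clone of $y\in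 V(H)$ if $N_H(u)=\{x,y,z\}$ where $x\text{-}y\text{-}z$ is a subpath of $H$. Two vertices $u,v\notin V(H)$ are nested with respect to $H$ if there exist distinct $a,b\in V(H)$ such that one of the two $a$–$b$ paths of $H$ contains all neighbors of $u$ in $H$ and the other contains all neighbors of $v$ in $H$. *)

(* Defs.v *)
(* Finite simple graphs: vertex type T : finType, adjacency
   e : rel T (assumed symmetric and irreflexive in the theorem). *)
From mathcomp Require Import all_boot.
Set Implicit Arguments. Unset Strict Implicit. Unset Printing Implicit Defensive.

Definition cyc (T : Type) (c : seq T) (d : T) (k : nat) : T := nth d c (k %% size c).

Definition is_path (T : finType) (e : rel T) (p : seq T) : Prop :=
  p <> [::] /\ uniq p /\
  forall (x0 : T) (i j : nat), i < size p -> j < size p ->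
    (e (nth x0 p i) (nth x0 p j) <-> (i = j.+1 \/ j = i.+1)).

Definition path_ab (T : finType) (e : rel T) (p : seq T) (a b : T) : Prop :=
  is_path e p /\ head a p = a /\ last a p = b.

Definition is_hole (T : finType) (e : rel T) (c : seq T) : Prop :=
  4 <= size c /\ uniq c /\
  forall (x0 : T) (i j : nat), i < size c -> j < size c ->
    (e (nth x0 c i) (nth x0 c j) <->
       (i = j.+1 %% size c \/ j = i.+1 %% size c)).

Definition induces_hole (T : finType) (e : rel T) (s : seq T) : Prop :=
  exists c : seq T, is_hole e c /\ c =i s.

Definition has_theta (T : finType) (e : rel T) : Prop :=
  exists (a b : T) (P1 P2 P3 : seq T),
    a <> b /\ ~~ e a b /\
    path_ab e P1 a b /\ path_ab e P2 a b /\ path_ab e P3 a b /\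
    (forall x, x \in P1 -> x \in P2 -> x = a \/ x = b) /\
    (forall x, x \in P1 -> x \in P3 -> x = a \/ x = b) /\
    (forall x, x \in P2 -> x \in P3 -> x = a \/ x = b) /\
    induces_hole e (P1 ++ P2) /\ induces_hole e (P1 ++ P3) /\
    induces_hole e (P2 ++ P3).

Definition has_pyramid (T : finType) (e : rel T) : Prop :=
  exists (a b1 b2 b3 : T) (P1 P2 P3 : seq T),
    e b1 b2 /\ e b1 b3 /\ e b2 b3 /\
    path_ab e P1 a b1 /\ path_ab e P2 a b2 /\ path_ab e P3 a b3 /\
    (forall x, x \in P1 -> x \in P2 -> x = a) /\
    (forall x, x \in P1 -> x \in P3 -> x = a) /\
    (forall x, x \in P2 -> x \in P3 -> x = a) /\
    induces_hole e (P1 ++ P2) /\ induces_hole e (P1 ++ P3) /\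
    induces_hole e (P2 ++ P3).

Definition has_prism (T : finType) (e : rel T) : Prop :=
  exists (a1 a2 a3 b1 b2 b3 : T) (P1 P2 P3 : seq T),
    e a1 a2 /\ e a1 a3 /\ e a2 a3 /\
    e b1 b2 /\ e b1 b3 /\ e b2 b3 /\
    [disjoint [:: a1; a2; a3] & [:: b1; b2; b3]] /\
    path_ab e P1 a1 b1 /\ path_ab e P2 a2 b2 /\ path_ab e P3 a3 b3 /\
    [disjoint P1 & P2] /\ [disjoint P1 & P3] /\ [disjoint P2 & P3] /\
    induces_hole e (P1 ++ P2) /\ induces_hole e (P1 ++ P3) /\
    induces_hole e (P2 ++ P3).

Definition has_turtle (T : finType) (e : rel T) : Prop :=
  exists (a1 b1 a2 b2 x y : T) (P1 P2 : seq T),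
    path_ab e P1 a1 b1 /\ path_ab e P2 a2 b2 /\ [disjoint P1 & P2] /\
    e a1 a2 /\ e b1 b2 /\ induces_hole e (P1 ++ P2) /\
    x \notin P1 ++ P2 /\ y \notin P1 ++ P2 /\ e x y /\
    3 <= count (e x) P1 /\ ~~ has (e x) P2 /\
    3 <= count (e y) P2 /\ ~~ has (e y) P1.

Definition in_C (T : finType) (e : rel T) : Prop :=
  ~ has_theta e /\ ~ has_pyramid e /\ ~ has_prism e /\ ~ has_turtle e.

Definition has_nbr_in (T : finType) (e : rel T) (c : seq T) (u : T) : Prop :=
  exists x, x \in c /\ e u x.

Definition minor (T : finType) (e : rel T) (c : seq T) (u : T) : Prop :=
  has_nbr_in e c u /\
  exists i, i < size c /\
    forall x, x \in c -> e u x ->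
      x = cyc c u i \/ x = cyc c u i.+1 \/ x = cyc c u i.+2.

Definition major (T : finType) (e : rel T) (c : seq T) (u : T) : Prop :=
  has_nbr_in e c u /\ ~ minor e c u.

Definition clone_of (T : finType) (e : rel T) (c : seq T) (u y : T) : Prop :=
  exists i, i < size c /\ y = cyc c u i.+1 /\
    forall x, (x \in c /\ e u x) <->
      (x = cyc c u i \/ x = cyc c u i.+1 \/ x = cyc c u i.+2).

Definition is_clone (T : finType) (e : rel T) (c : seq T) (u : T) : Prop :=
  exists y, y \in c /\ clone_of e c u y.

(* vertices of the path of the hole c going forward from c_i to c_j *)
Definition arc (T : Type) (c : seq T) (d : T) (i j : nat) (x : T) : Prop :=
  exists k, k <= (j + size c - i) %% size c /\ x = cyc c d (i + k).

Definition nested (T : finType) (e : rel T) (c : seq T) (u v : T) : Prop :=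
  exists i j, i < size c /\ j < size c /\ i <> j /\
    (forall x, x \in c -> e u x -> arc c u i j x) /\
    (forall x, x \in c -> e v x -> arc c u j i x).

(* Main.v *)
Require Import Defs.
From mathcomp Require Import all_boot.
From mathcomp Require Import zify.
Set Implicit Arguments. Unset Strict Implicit. Unset Printing Implicit Defensive.


Lemma addmod_inj n k a b : a < n -> b < n -> (k + a) %% n = (k + b) %% n -> a = b.
Proof. by move=> ha hb /eqP; rewrite eqn_modDl !modn_small // => /eqP. Qed.

Lemma modSmod a n : (a %% n).+1 %% n = a.+1 %% n.
Proof. by rewrite -addn1 modnDml addn1. Qed.

Lemma cyc_mod (T : Type) (c : seq T) d a : cyc c d (a %% size c) = cyc c d a.
Proof. by rewrite /cyc modn_mod. Qed.

Lemma cyc_eqmod (T : Type) (c : seq T) d a b :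
  a %% size c = b %% size c -> cyc c d a = cyc c d b.
Proof. by rewrite /cyc => ->. Qed.

Lemma cyc_in (T : eqType) (c : seq T) d a : 0 < size c -> cyc c d a \in c.
Proof. by move=> h; rewrite /cyc mem_nth // ltn_pmod. Qed.

Lemma cyc_inj (T : eqType) (c : seq T) d a b : uniq c -> 0 < size c ->
  cyc c d a = cyc c d b -> a %% size c = b %% size c.
Proof.
move=> u h /eqP; rewrite /cyc nth_uniq ?ltn_pmod //; by move/eqP.
Qed.

Lemma in_cyc (T : eqType) (c : seq T) d x k : x \in c ->
  exists2 t, t < size c & x = cyc c d (k + t).
Proof.
move=> hx. have h0 : 0 < size c by case: c hx.
set n := size c. set p := index x c.
have hp : p < n by rewrite index_mem.
exists ((p + (n - k %% n)) %% n); first by rewrite ltn_pmod.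
rewrite /cyc -/n modnDmr.
have -> : k + (p + (n - k %% n)) = (k %/ n) * n + n + p.
  have := divn_eq k n. have := ltn_pmod k h0. lia.
by rewrite -addnA modnMDl addnC modnDr modn_small // nth_index.
Qed.

Lemma cyc_adj (T : finType) (e : rel T) c d a b : is_hole e c ->
  e (cyc c d a) (cyc c d b) <-> (a %% size c = b.+1 %% size c \/ b %% size c = a.+1 %% size c).
Proof.
move=> [h4 [hu hadj]]. have h0 : 0 < size c by lia.
rewrite /cyc hadj ?ltn_pmod // !modSmod; done.
Qed.

Definition win (T : Type) (c : seq T) (d : T) k m := mkseq (fun t => cyc c d (k + t)) m.

Lemma size_win (T : Type) (c : seq T) d k m : size (win c d k m) = m.
Proof. by rewrite size_mkseq. Qed.

Lemma nth_win (T : Type) (c : seq T) d x0 k m t : t < m -> nth x0 (win c d k m) t = cyc c d (k + t).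
Proof. by move=> h; rewrite nth_mkseq. Qed.

Lemma mem_win (T : eqType) (c : seq T) d k m x :
  x \in win c d k m <-> exists2 t, t < m & x = cyc c d (k + t).
Proof.
split.
- by case/mapP=> t; rewrite mem_iota add0n => ht ->; exists t.
- by case=> t ht ->; apply/mapP; exists t; rewrite // mem_iota.
Qed.

Lemma win_sub (T : eqType) (c : seq T) d k m x : 0 < size c -> x \in win c d k m -> x \in c.
Proof. by move=> h /mem_win [t _ ->]; apply: cyc_in. Qed.

Lemma win_uniq (T : eqType) (c : seq T) d k m : uniq c -> m <= size c -> uniq (win c d k m).
Proof.
move=> hu hm. case: m hm => [|m] hm; first by [].
have h0 : 0 < size c by lia.
rewrite /win /mkseq map_inj_in_uniq ?iota_uniq //.
move=> a b; rewrite !mem_iota !add0n => ha hb /(cyc_inj hu h0).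
apply: addmod_inj; lia.
Qed.

Lemma win_cat (T : Type) (c : seq T) d k m r : win c d k (m + r) = win c d k m ++ win c d (k + m) r.
Proof.
rewrite /win /mkseq iotaD map_cat add0n; congr (_ ++ _).
rewrite -[m in iota m]addn0 iotaDl -map_comp; apply: eq_map => t /=.
by rewrite addnA.
Qed.

Lemma win_adj (T : finType) (e : rel T) c d k t t' : is_hole e c -> t < size c -> t'.+1 < size c ->
  t.+1 < size c ->
  (e (cyc c d (k + t)) (cyc c d (k + t')) <-> (t = t'.+1 \/ t' = t.+1)).
Proof.
move=> hH ht ht' ht2; rewrite cyc_adj // -!addnS.
split; case=> h; [left|right|left|right].
- by apply: (addmod_inj _ _ h).
- by apply: (addmod_inj _ _ h); lia.
- by rewrite h.
- by rewrite h.
Qed.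

Lemma win_path (T : finType) (e : rel T) c d k m : is_hole e c -> 0 < m -> m < size c ->
  is_path e (win c d k m).
Proof.
move=> hH hm hmn. have hu := hH.2.1.
split; first by case: m hm {hmn} => // m _; rewrite /win /mkseq.
split; first by apply: win_uniq => //; apply: ltnW.
move=> x0 i j; rewrite size_win => hi hj; rewrite !nth_win //.
apply: win_adj => //; lia.
Qed.


Lemma win_full (T : eqType) (c : seq T) d k : 0 < size c -> win c d k (size c) =i c.
Proof.
move=> h x; apply/idP/idP; first exact: win_sub.
by move=> hx; apply/mem_win; apply: in_cyc.
Qed.

Lemma path_rev (T : finType) (e : rel T) p : is_path e p -> is_path e (rev p).
Proof.
move=> [hn [hu ha]]; split; first by case: p hn {hu ha} => // x p _; rewrite rev_cons; case: (rev p).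
split; first by rewrite rev_uniq.
move=> x0 i j; rewrite size_rev => hi hj; rewrite !nth_rev // ha; try lia.
Qed.

Lemma hole_cons (T : finType) (e : rel T) (esym : symmetric e) (eirr : irreflexive e) p w :
  is_path e p -> 3 <= size p -> w \notin p ->
  (forall y, y \in p -> (e w y <-> y = head w p \/ y = last w p)) ->
  is_hole e (w :: p).
Proof.
move=> [hn [hu ha]] h3 hw hN.
split; first by rewrite /=; lia.
split; first by rewrite /= hw hu.
have hnth : forall x0 t, t < size p -> (e w (nth x0 p t) <-> t = 0 \/ t = (size p).-1).
  move=> x0 t ht; rewrite hN ?mem_nth // -(nth0 w) -(nth_last w).
  have h0 : 0 < size p by lia.
  have hl : (size p).-1 < size p by lia.
  rewrite (set_nth_default x0 w h0) (set_nth_default x0 w hl).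
  split; [case=> /eqP; rewrite nth_uniq // => /eqP h; by [left|right] | by case=> ->; [left|right]].
move=> x0 [|i] [|j] /= hi hj.
- rewrite eirr modn_small; last lia. split=> //; lia.
- rewrite hnth; last lia.
  case: (ltnP j.+2 (size p).+1) => hj2.
  + rewrite !modn_small //; lia.
  + have -> : j.+2 = (size p).+1 by lia.
    rewrite modnn modn_small; lia.
- rewrite esym hnth; last lia.
  case: (ltnP i.+2 (size p).+1) => hi2.
  + rewrite !modn_small //; lia.
  + have -> : i.+2 = (size p).+1 by lia.
    rewrite modnn modn_small; lia.
- rewrite ha; try lia.
  case: (ltnP i.+2 (size p).+1) => hi2; case: (ltnP j.+2 (size p).+1) => hj2.
  + rewrite !modn_small //; lia.
  + have -> : j.+2 = (size p).+1 by lia. rewrite modnn modn_small; lia.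
  + have -> : i.+2 = (size p).+1 by lia. rewrite modnn modn_small; lia.
  + have -> : i.+2 = (size p).+1 by lia. have -> : j.+2 = (size p).+1 by lia.
    rewrite modnn; lia.
Qed.

Lemma head_def (T : Type) (s : seq T) x y : s <> [::] -> head x s = head y s.
Proof. by case: s. Qed.
Lemma last_def (T : Type) (s : seq T) x y : s <> [::] -> last x s = last y s.
Proof. by case: s. Qed.

Lemma theta_of (T : finType) (e : rel T) (esym : symmetric e) (eirr : irreflexive e)
  c (hH : is_hole e c) w (hw : w \notin c) x1 x2 (h1 : x1 \in c) (h2 : x2 \in c)
  (hne : x1 != x2) (hna : ~~ e x1 x2)
  (hN : forall z, z \in c -> (e w z <-> z = x1 \/ z = x2)) : has_theta e.
Proof.
have [h4 [hu hadj]] := hH.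
set n := size c in h4 hu hadj *.
have h0 : 0 < n by lia.
have [p hp ex1] := in_cyc w 0 h1. rewrite add0n in ex1.
have [r hr ex2] := in_cyc w p h2.
have {hp}hp : p < n := hp. have {hr}hr : r < n := hr.
have hr0 : r != 0.
  apply/negP=> /eqP hr0; move: hne; by rewrite ex1 ex2 hr0 addn0 eqxx.
have hr1 : r != 1.
  apply/negP=> /eqP hr1; move/negP: hna; apply; rewrite ex1 ex2 hr1 -{1}(addn0 p).
  apply/(win_adj w p (t:=0) (t':=1) hH); lia.
have hr2 : r != n.-1.
  apply/negP=> /eqP hr2; move/negP: hna; apply; rewrite esym ex1 ex2 hr2.
  apply/(cyc_adj w _ _ hH); right.
  by rewrite -/n -addnS prednK // modnDr.
have hwin : forall k m z, z \in win c w k m -> z \in c by move=> k m z; apply: win_sub.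
set P1 := win c w p r.+1.
set W := win c w (p + r) (n - r).+1.
set P3 := rev W.
have hP1 : is_path e P1 by apply: win_path => //; lia.
have hW : is_path e W by apply: win_path => //; lia.
have hP3 : is_path e P3 by apply: path_rev.
have hd1 : head w P1 = x1 by rewrite -nth0 nth_win // addn0.
have hl1 : last w P1 = x2 by rewrite -nth_last size_win nth_win.
have hd3 : head w P3 = x1.
  rewrite -nth0 nth_rev size_win // nth_win; last lia.
  by rewrite ex1; apply: cyc_eqmod; rewrite -/n -(modnDr p n); congr (_ %% _); lia.
have hl3 : last w P3 = x2.
  rewrite -nth_last size_rev size_win nth_rev size_win; last lia.
  have -> : (n - r).+1 - (n - r).+1.-1.+1 = 0 by lia.
  by rewrite nth_win // addn0.
have hx1P1 : x1 \in P1 by rewrite -hd1 -nth0 mem_nth // size_win.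
have hx2P1 : x2 \in P1 by rewrite -hl1 -nth_last mem_nth // size_win.
have hx1P3 : x1 \in P3 by rewrite -hd3 -nth0 mem_nth // size_rev size_win.
have hx2P3 : x2 \in P3 by rewrite -hl3 -nth_last mem_nth // size_rev size_win.
have hwP1 : w \notin P1 by apply/negP=> /hwin; apply/negP.
have hwP3 : w \notin P3 by apply/negP; rewrite mem_rev => /hwin; apply/negP.
have hP2 : is_path e [:: x1; w; x2].
  split=> //; split.
    have n1 : x1 != w by apply/negP=> /eqP ex; move: hw; rewrite -ex h1.
    have n2 : w != x2 by apply/negP=> /eqP ex; move: hw; rewrite ex h2.
    by rewrite /= !inE !negb_or n1 n2 hne.
  have ew1 : e w x1 by apply/hN => //; left.
  have ew2 : e w x2 by apply/hN => //; right.
  have ne : ~ e x1 x2 by apply/negP.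
  have ew1' : e x1 w by rewrite esym.
  have ew2' : e x2 w by rewrite esym.
  have ne' : ~ e x2 x1 by rewrite esym.
  move=> x0 [|[|[|i]]] [|[|[|j]]] //= _ _; rewrite ?eirr ?ew1 ?ew2 ?ew1' ?ew2';
  try (split=> // _; by [left|right]);
  (split; [move=> h; exfalso; by [apply: ne | apply: ne' | ] | by case]).
have hmemP : forall z, z \in [:: x1; w; x2] -> z = x1 \/ z = w \/ z = x2.
  by move=> z; rewrite !inE => /or3P [] /eqP; auto.
exists x1, x2, P1, [:: x1; w; x2], P3.
split; first by apply/eqP.
split=> //.
split; first by split=> //; rewrite (head_def _ w) ?(last_def _ w) //; case: hP1.
split; first by [].
split; first by split=> //; rewrite (head_def _ w) ?(last_def _ w) //; case: hP3.
split.
  move=> z hz /hmemP [->|[ez|->]]; auto. by move: hwP1; rewrite -ez hz.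
split.
  move=> z /mem_win [s hs ->]; rewrite mem_rev => /mem_win [t ht].
  move/(cyc_inj hu h0); rewrite -/n.
  case: (ltnP (r + t) n) => hrt.
    rewrite -addnA => hm.
    have h : s = r + t by apply: (addmod_inj _ _ hm); clear -hs ht hrt hr; lia.
    right; rewrite ex2 h; congr (cyc _ _ (_ + _)); clear -h hs; lia.
  have -> : p + r + t = p + n by clear -hs ht hrt hr; lia.
  rewrite modnDr -{2}(addn0 p) => hm.
  have h : s = 0 by apply: (addmod_inj _ _ hm); clear -hs ht hrt hr; lia.
  by left; rewrite ex1 h addn0.
split.
  move=> z /hmemP [->|[->|->]] //; auto. by rewrite (negbTE hwP3).
split.
  exists (w :: P1); split.
    apply: hole_cons => //; first by rewrite size_win; clear -hr0 hr1; lia.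
    move=> y hy; rewrite hd1 hl1; apply: hN; exact: hwin hy.
  move=> z; have -> : (z \in w :: P1) = (z == w) || (z \in P1) by [].
  rewrite mem_cat.
  have -> : (z \in [:: x1; w; x2]) = [|| z == x1, z == w | z == x2] by rewrite !inE.
  case: (z =P x1) => [->|_]; first by rewrite hx1P1 orbT.
  case: (z =P x2) => [->|_]; first by rewrite hx2P1 orbT.
  by rewrite orbC /= !orbF.
split.
  exists c; split=> // z; rewrite mem_cat mem_rev; apply/idP/idP.
    move=> hz; have [s hs0 ->] := in_cyc w p hz. have hs : s < n := hs0.
    case: (leqP s r) => hsr.
      by apply/orP; left; apply/mem_win; exists s.
    apply/orP; right; apply/mem_win; exists (s - r).
      by clear -hs hsr; lia.
    by congr (cyc _ _ _); clear -hsr; lia.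
  by case/orP; apply: hwin.
exists (w :: P3); split.
  apply: hole_cons => //; first by rewrite size_rev size_win; clear -hr hr0 hr2; lia.
  move=> y hy; rewrite hd3 hl3; apply: hN; move: hy; rewrite /P3 mem_rev; exact: hwin.
move=> z; have -> : (z \in w :: P3) = (z == w) || (z \in P3) by [].
rewrite mem_cat.
have -> : (z \in [:: x1; w; x2]) = [|| z == x1, z == w | z == x2] by rewrite !inE.
case: (z =P x1) => [->|_]; first by rewrite hx1P3 orbT.
case: (z =P x2) => [->|_]; first by rewrite hx2P3 !orbT.
by rewrite /= !orbF.
Qed.

Lemma cyc_dist (T : eqType) (c : seq T) d k a b : uniq c -> a < size c -> b < size c -> a != b ->
  cyc c d (k + a) != cyc c d (k + b).
Proof.
move=> hu ha hb hab; apply/negP=> /eqP /(cyc_inj hu) h.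
have h0 : 0 < size c by case: (size c) ha.
by move: hab; rewrite (addmod_inj ha hb (h h0)) eqxx.
Qed.

Lemma three_nbrs (T : finType) (e : rel T) (esym : symmetric e) (eirr : irreflexive e)
  (hth : ~ has_theta e) c (hH : is_hole e c) w (hw : w \notin c)
  (h : major e c w \/ is_clone e c w) :
  exists x y z, [/\ x \in c, y \in c & z \in c] /\ [/\ e w x, e w y & e w z] /\
    [/\ x != y, y != z & z != x].
Proof.
have [h4 [hu hadj]] := hH.
have h0 : 0 < size c by lia.
case: h => [[hnb hmin] | [y0 [_ [i [hi [_ hiff]]]]]]; last first.
  have [ha1 ha2] := proj2 (hiff (cyc c w i)) (or_introl erefl).
  have [hb1 hb2] := proj2 (hiff (cyc c w i.+1)) (or_intror (or_introl erefl)).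
  have [hc1 hc2] := proj2 (hiff (cyc c w i.+2)) (or_intror (or_intror erefl)).
  exists (cyc c w i), (cyc c w i.+1), (cyc c w i.+2); split=> //; split=> //.
  have -> : cyc c w i = cyc c w (i + 0) by rewrite addn0.
  have -> : cyc c w i.+1 = cyc c w (i + 1) by rewrite addn1.
  have -> : cyc c w i.+2 = cyc c w (i + 2) by rewrite addn2.
  split; apply: cyc_dist => //; exact: (leq_trans _ h4).
set S := [set x | (x \in c) && e w x].
have inS : forall x, (x \in S) = (x \in c) && e w x by move=> x; rewrite inE.
case: (ltnP 2 #|S|) => [/card_gt2P [x [y [z [[hx hy hz] hd]]]] | hle].
  move: hx hy hz; rewrite !inS => /andP [? ?] /andP [? ?] /andP [? ?].
  by exists x, y, z.
exfalso; apply: hmin.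
have [x0 [hx0 ex0]] := hnb.
have : #|S| = 0 \/ #|S| = 1 \/ #|S| = 2 by lia.
case=> [/cards0_eq hS | [/eqP/cards1P [a hS] | /eqP/cards2P [a [b [hab hS]]]]].
- have : x0 \in S by rewrite inS hx0 ex0.
  by rewrite hS inE.
- have : a \in S by rewrite hS inE.
  rewrite inS => /andP [ha _].
  have [t ht ea] := in_cyc w 0 ha.
  split=> //; exists t; split=> // y hy ey.
  have : y \in S by rewrite inS hy ey.
  by rewrite hS inE => /eqP ->; left; rewrite ea.
- have : a \in S by rewrite hS !inE eqxx.
  rewrite inS => /andP [ha ewa].
  have : b \in S by rewrite hS !inE eqxx orbT.
  rewrite inS => /andP [hb ewb].
  have hyS : forall y, y \in c -> e w y -> y = a \/ y = b.
    move=> y hy ey; have : y \in S by rewrite inS hy ey.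
    by rewrite hS !inE => /orP [] /eqP; auto.
  case: (boolP (e a b)) => eab; last first.
    exfalso; apply: hth; apply: (theta_of esym eirr hH hw ha hb hab eab).
    move=> z hz; split; first exact: hyS.
    by case=> ->.
  have [ta hta ea] := in_cyc w 0 ha.
  have [tb htb eb] := in_cyc w 0 hb.
  move: eab; rewrite ea eb => /(cyc_adj w _ _ hH) [hm | hm].
  + split=> //; exists tb; split=> // y hy ey.
    case: (hyS y hy ey) => ->; [right; left | left]; rewrite ?ea ?eb //.
    by apply: cyc_eqmod; rewrite hm add0n.
  + split=> //; exists ta; split=> // y hy ey.
    case: (hyS y hy ey) => ->; [left | right; left]; rewrite ?ea ?eb //.
    by apply: cyc_eqmod; rewrite hm add0n.
Qed.

Lemma mod_big x n : n <= x -> x < n + n -> x %% n = x - n.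
Proof. move=> h1 h2; have -> : x = (x - n) + n by lia. rewrite modnDr modn_small; lia. Qed.

Lemma nest_arith i j n : i < n -> j < n -> i <> j ->
  let d := (j + n - i) %% n in
  [/\ 0 < d, d < n, (i + d) %% n = j & (i + n - j) %% n = n - d].
Proof.
move=> hi hj hij d.
case: (ltnP i j) => h.
  have hd : d = j - i by rewrite /d mod_big; lia.
  rewrite hd; split; try lia.
    by rewrite modn_small; lia.
  by rewrite modn_small; lia.
have hd : d = j + n - i by rewrite /d modn_small; lia.
rewrite hd; split; try lia.
  by rewrite mod_big; lia.
by rewrite mod_big; lia.
Qed.

Lemma split_of (T : finType) (e : rel T) c (hH : is_hole e c) u v
  (hnest : nested e c u v) (hnc : forall w, w \in c -> e u w -> e v w -> False)
  (hun : exists x, x \in c /\ e u x) (hvn : exists x, x \in c /\ e v x) :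
  exists k m, [/\ 0 < m, m < size c,
    (forall x, x \in c -> e u x -> x \in win c u k m) &
    (forall x, x \in c -> e v x -> x \in win c u (k + m) (size c - m))].
Proof.
have [h4 [hu _]] := hH.
move: hnest => [i [j [hi [hj [hij [hU hV]]]]]].
set n := size c in h4 hi hj hU hV *.
have h0 : 0 < n by lia.
have [hd0 hdn hid hijd] := nest_arith hi hj hij.
set d := (j + n - i) %% n in hd0 hdn hid hijd hU.
have hcj : forall s, cyc c u (j + s) = cyc c u (i + d + s).
  by move=> s; apply: cyc_eqmod; rewrite -/n -(modnDml (i + d)) hid.
have hcn : cyc c u (i + d + (n - d)) = cyc c u (i + 0).
  by apply: cyc_eqmod; rewrite -/n addn0 -addnA subnKC ?modnDr //; apply: ltnW.
have [lo [hlo1 hlo0 hloE]] : exists lo, [/\ lo <= 1, lo = 0 -> ~~ e v (cyc c u (i + 0)) &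
    lo = 1 -> e v (cyc c u (i + 0))].
  by exists (e v (cyc c u (i + 0))); case: (e v _).
have [hb [hb1 hb0 hbE]] : exists hb, [/\ hb <= 1, hb = 0 -> ~~ e v (cyc c u (i + d)) &
    hb = 1 -> e v (cyc c u (i + d))].
  by exists (e v (cyc c u (i + d))); case: (e v _).
have hUs : forall x, x \in c -> e u x -> exists2 s, lo <= s < d.+1 - hb & x = cyc c u (i + s).
  move=> x hx ex; have [s [hs0 ex']] := hU x hx ex. have hs : s <= d := hs0.
  rewrite ex' in ex *.
  exists s => //; apply/andP; split.
    case: (posnP lo) => [-> //|hl]; case: (posnP s) => [hs00|]; last by clear -hl hlo1; lia.
    exfalso; apply: (hnc (cyc c u (i + s))); [exact: cyc_in | by [] | ].
    by rewrite hs00; apply: hloE; clear -hl hlo1; lia.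
  case: (posnP hb) => [-> |hl]; first by clear -hs; lia.
  case: (ltnP s d) => [|hsd]; first by clear -hl hb1; lia.
  have hsd' : s = d by clear -hs hsd; lia.
  exfalso; apply: (hnc (cyc c u (i + s))); [exact: cyc_in | by [] |].
  by rewrite hsd'; apply: hbE; clear -hl hb1; lia.
have [x0 [hx0 ex0]] := hun.
have [s0 hs0 _] := hUs x0 hx0 ex0.
have hlt : lo < d.+1 - hb by clear -hs0; lia.
have hVs : forall x, x \in c -> e v x -> exists2 s, 0 < s + hb & s < n - d + lo /\ x = cyc c u (i + d + s).
  move=> x hx ex; have [s [hsv ex']] := hV x hx ex.
  have hs : s <= n - d by rewrite -hijd; exact: hsv.
  rewrite ex' hcj in ex *.
  exists s; last split=> //.
    case: (posnP hb) => [hb00|]; last by clear; lia.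
    case: (posnP s) => [hs00|]; last by clear; lia.
    exfalso; move/negP: (hb0 hb00); apply; move: ex; by rewrite hs00 addn0.
  case: (posnP lo) => [hl0|]; last by clear -hs hb1 hlo1; lia.
  case: (ltnP s (n - d)) => [|hsd]; first by clear; lia.
  have hsd' : s = n - d by clear -hs hsd; lia.
  exfalso; move/negP: (hlo0 hl0); apply; move: ex; by rewrite hsd' hcn.
have [y0 [hy0 ey0]] := hvn.
have [t0 ht0 [ht0' _]] := hVs y0 hy0 ey0.
exists (i + lo), (d.+1 - hb - lo); split.
- by clear -hlt; lia.
- by clear -ht0 ht0' hb1 hlo1 hdn hlt; lia.
- move=> x hx ex; have [s /andP [hs1 hs2] ->] := hUs x hx ex.
  apply/mem_win; exists (s - lo); first by clear -hs1 hs2; lia.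
  by congr (cyc _ _ _); clear -hs1; lia.
- move=> x hx ex; have [s hs1 [hs2 ->]] := hVs x hx ex.
  apply/mem_win; exists (s + hb - 1); first by clear -hs1 hs2 hlt hb1 hlo1 hdn; lia.
  by congr (cyc _ _ _); clear -hs1 hlt hb1 hlo1; lia.
Qed.

Lemma count3 (T : eqType) (p : pred T) s x y z : x \in s -> y \in s -> z \in s ->
  p x -> p y -> p z -> [/\ x != y, y != z & z != x] -> 3 <= count p s.
Proof.
move=> hx hy hz px py pz [dxy dyz dzx].
rewrite -size_filter.
have -> : 3 = size [:: x; y; z] by [].
apply: uniq_leq_size.
  by rewrite /= !inE negb_or dxy eq_sym dzx dyz.
by move=> w; rewrite !inE => /or3P [] /eqP ->; rewrite mem_filter ?px ?py ?pz.
Qed.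

Lemma turtle_of (T : finType) (e : rel T) c (hH : is_hole e c) u v
  (hu : u \notin c) (hv : v \notin c) (huv : e u v) k m (hm0 : 0 < m) (hmn : m < size c)
  (HU : forall x, x \in c -> e u x -> x \in win c u k m)
  (HV : forall x, x \in c -> e v x -> x \in win c u (k + m) (size c - m))
  (h3u : exists x y z, [/\ x \in c, y \in c & z \in c] /\ [/\ e u x, e u y & e u z] /\
    [/\ x != y, y != z & z != x])
  (h3v : exists x y z, [/\ x \in c, y \in c & z \in c] /\ [/\ e v x, e v y & e v z] /\
    [/\ x != y, y != z & z != x]) : has_turtle e.
Proof.
have [h4 [huq _]] := hH.
set n := size c in h4 hmn HV *.
have h0 : 0 < n by lia.
set P1 := win c u k m.
set Q := win c u (k + m) (n - m).
have hsub : forall k' m' z, z \in win c u k' m' -> z \in c by move=> k' m' z; apply: win_sub.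
have hdis : forall z, z \in P1 -> z \in Q -> False.
  move=> z /mem_win [s hs ->] /mem_win [t ht] /(cyc_inj huq h0).
  rewrite -addnA => hmod.
  have : s = m + t by apply: (addmod_inj _ _ hmod); rewrite -/n; clear -hs ht hmn; lia.
  by clear -hs; lia.
have hP1 : is_path e P1 by apply: win_path.
have hQ : is_path e Q.
  apply: win_path => //; rewrite /n in hmn *; clear -hm0 hmn; lia.
have hW : c =i P1 ++ rev Q.
  move=> z; rewrite mem_cat mem_rev -mem_cat /P1 /Q -win_cat.
  have -> : m + (n - m) = n by clear -hmn; lia.
  by rewrite win_full.
exists (cyc c u (k + 0)), (cyc c u (k + m.-1)), (cyc c u (k + m + (n - m - 1))),
  (cyc c u (k + m + 0)), u, v, P1, (rev Q).
split.
  split=> //; split; first by rewrite -nth0 nth_win.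
  by rewrite -nth_last size_win nth_win //; clear -hm0; lia.
split.
  split; first by apply: path_rev.
  split.
    by rewrite -nth0 nth_rev size_win ?nth_win //; clear -hm0 hmn; lia.
  rewrite -nth_last size_rev size_win nth_rev size_win; last by clear -hm0 hmn; lia.
  rewrite nth_win; last by clear -hm0 hmn; lia.
  by congr (cyc _ _ _); clear -hm0 hmn; lia.
split.
  by rewrite disjoint_has; apply/hasP => [[z hz1]]; rewrite mem_rev; apply: hdis.
split.
  apply/(cyc_adj u _ _ hH); left; rewrite -/n.
  have -> : (k + m + (n - m - 1)).+1 = k + 0 + n by clear -hm0 hmn; lia.
  by rewrite modnDr.
split.
  apply/(cyc_adj u _ _ hH); right; rewrite -/n.
  by congr (_ %% _); clear -hm0; lia.
split; first by exists c; split.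
split; first by rewrite -hW.
split; first by rewrite -hW.
split=> //.
have [x1 [y1 [z1 [hxyz [exyz hd]]]]] := h3u. case: hxyz => hx hy hz. case: exyz => ex ey ez.
have [x2 [y2 [z2 [hxyz [exyz hd']]]]] := h3v. case: hxyz => hx' hy' hz'. case: exyz => ex' ey' ez'.
split; first by apply: (count3 (HU _ hx ex) (HU _ hy ey) (HU _ hz ez)).
split.
  apply/hasP => [[z hz1 ez1]]; move: hz1; rewrite mem_rev => hz1.
  by apply: (hdis z) => //; apply: HU => //; apply: hsub hz1.
split.
  by apply: (count3 (x:=x2) (y:=y2) (z:=z2)); rewrite ?mem_rev; try apply: HV.
apply/hasP => [[z hz1 ez1]].
by apply: (hdis z) => //; apply: HV => //; apply: hsub hz1.
Qed.

Theorem lemma2p5 (T : finType) (e : rel T)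
  (esym : symmetric e) (eirr : irreflexive e) (hC : in_C e)
  (c : seq T) (hH : is_hole e c) (u v : T)
  (huH : u \notin c) (hvH : v \notin c)
  (hu : major e c u \/ is_clone e c u) (hv : major e c v \/ is_clone e c v)
  (hnest : nested e c u v) (huv : e u v) :
  exists w, w \in c /\ e u w /\ e v w.
Proof.
case: (boolP (has (fun w => e u w && e v w) c)) => [/hasP [w hw /andP [h1 h2]] | hno].
  by exists w.
exfalso; have [hth [_ [_ htu]]] := hC.
have hnc : forall w, w \in c -> e u w -> e v w -> False.
  by move=> w hw h1 h2; move/negP: hno; apply; apply/hasP; exists w => //; rewrite h1 h2.
have h3u := three_nbrs esym eirr hth hH huH hu.
have h3v := three_nbrs esym eirr hth hH hvH hv.
have hun : exists x, x \in c /\ e u x.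
  have [x [y [z [hxyz [exyz _]]]]] := h3u; case: hxyz => hx _ _; case: exyz => ex _ _.
  by exists x.
have hvn : exists x, x \in c /\ e v x.
  have [x [y [z [hxyz [exyz _]]]]] := h3v; case: hxyz => hx _ _; case: exyz => ex _ _.
  by exists x.
have [k [m [hm0 hmn HU HV]]] := split_of hH hnest hnc hun hvn.
by apply: htu; apply: (turtle_of hH huH hvH huv hm0 hmn HU HV h3u h3v).
Qed.
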